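(* For the RHA process and all $n\ge0$, $j\ge1$, $$H(X^n_j\mid\mathcal G_{\le n})=\log k_n\quad\text{and}\quad I(X^n_j;X^n_{j+1}\mid\mathcal G_{\le n})=0.$$
   Context: Random hierarchical association (RHA) process. Fix positive integers $(k_n)_{n\ge0}$ (perplexities) with $k_{n-1}\le k_n\le k_{n-1}^2$ for all $n\ge1$. On a probability space $(\Omega,\mathcal J,P)$ let, for each $n\ge1$, $(L_{nj},R_{nj})_{j=1}^{k_n}$ be the lexicographically sorted enumeration of a uniformly random $k_n$-element subset of $\{1,\dots,k_{n-1}\}^2$ (each of the $\binom{k_{n-1}^2}{k_n}$ subsets equally likely), independently over $n$. Let $(C_n)_{n\ge0}$ be independent, independent of all $(L_{nj},R_{nj})$, with $C_n$ uniform on $\{1,\dots,k_n\}$. Define strings $Y^0_j=j$ (length 1) for $1\le j\le k_0$ and $Y^n_j=Y^{n-1}_{L_{nj}}Y^{n-1}_{R_{nj}}$ (concatenation). The RHA process is $\mathcal X=Y^0_{C_0}Y^1_{C_1}Y^2_{C_2}\cdots=X_1X_2X_3\cdots$, $X_{k:l}=X_k\cdots X_l$; for $n\ge0$, $j\ge1$, $X^n_j=X_{j2^n:(j+1)2^n-1}$. $\mathcal G_{\le n}=(L_{lj},R_{lj})_{1\le l\le n,\,1\le j\le k_l}$ ($\mathcal G_{\le0}$ trivial). Logarithms are natural; $H(X|Y)=\mathbb E_P[-\log P(X|Y)]$ and $I(X;Y|Z)=H(X|Z)-H(X|Y,Z)$. *)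

(* Defs.v *)
From Stdlib Require Import Reals.
From HB Require Import structures.
From mathcomp Require Import all_boot.
Set Implicit Arguments.
Unset Strict Implicit.
Unset Printing Implicit Defensive.

(* The probability space is the uniform distribution on a finite set Om. *)
(* H(X|Z) = E[-log P(X|Z)],  P(X=x|Z=z) = #{X=x,Z=z} / #{Z=z}.            *)
Definition condEnt {T : finType} {A B : eqType} (Om : {set T})
  (X : T -> A) (Z : T -> B) : R :=
  \big[Rplus/R0]_(w in Om)
    (Rdiv (Ropp (ln (Rdiv (INR #|[set w' in Om | (X w' == X w) && (Z w' == Z w)]|)
                          (INR #|[set w' in Om | Z w' == Z w]|))))
          (INR #|Om|)).

Definition mutInf {T : finType} {A B C : eqType} (Om : {set T})
  (X : T -> A) (Y : T -> B) (Z : T -> C) : R :=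
  Rminus (condEnt Om X Z) (condEnt Om X (fun w => (Y w, Z w))).

(* Symbols/indices are 0-based: {1..k} is represented by {0..k-1}. *)
Definition bnd (k : nat -> nat) (N : nat) : nat := (\max_(l < N.+1) k l).+1.

(* outcome: for each level l <= N a set S_l of pairs (level 0 unused),
   and a choice C_l. *)
Definition outcome (k : nat -> nat) (N : nat) : finType :=
  ({ffun 'I_N.+1 -> {set 'I_(bnd k N) * 'I_(bnd k N)}}
   * {ffun 'I_N.+1 -> 'I_(bnd k N)})%type.

Definition valid (k : nat -> nat) (N : nat) (w : outcome k N) : bool :=
  [forall l : 'I_N.+1,
     (w.2 l < k l) &&
     (if (l : nat) == 0 then w.1 l == set0
      else (w.1 l \subset [set p : 'I_(bnd k N) * 'I_(bnd k N) | (p.1 < k l.-1) && (p.2 < k l.-1)])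
           && (#|w.1 l| == k l))].

(* Uniform measure on Omega = independent uniform k_l-subsets of
   [k_{l-1}]^2 (1<=l<=N) and independent uniform C_l in [k_l] (0<=l<=N). *)
Definition Omega (k : nat -> nat) (N : nat) : {set outcome k N} :=
  [set w | valid w].

Definition lvl (k : nat -> nat) (N : nat) (w : outcome k N) (l : nat)
  : {set 'I_(bnd k N) * 'I_(bnd k N)} :=
  if l <= N then w.1 (inord l) else set0.

Definition cho (k : nat -> nat) (N : nat) (w : outcome k N) (l : nat) : nat :=
  if l <= N then val (w.2 (inord l)) else 0.

Definition lexle (p q : nat * nat) : bool :=
  (p.1 < q.1) || ((p.1 == q.1) && (p.2 <= q.2)).

(* lexicographically sorted enumeration (L_{l,j}, R_{l,j})_j of S_l *)
Definition pairs (k : nat -> nat) (N : nat) (w : outcome k N) (l : nat)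
  : seq (nat * nat) :=
  sort lexle [seq ((val p.1 : nat), (val p.2 : nat)) | p <- enum (lvl w l)].

Fixpoint Ystr (k : nat -> nat) (N : nat) (w : outcome k N) (l j : nat)
  : seq nat :=
  match l with
  | 0 => [:: j]
  | l'.+1 => let p := nth (0, 0) (pairs w l'.+1) j in
             Ystr w l' p.1 ++ Ystr w l' p.2
  end.

(* X_1 X_2 ... X_{2^(N+1)-1} = Y^0_{C_0} Y^1_{C_1} ... Y^N_{C_N} *)
Definition Xseq (k : nat -> nat) (N : nat) (w : outcome k N) : seq nat :=
  flatten [seq Ystr w m (cho w m) | m <- iota 0 N.+1].

(* X^n_j = X_{j 2^n : (j+1) 2^n - 1} (1-based positions) *)
Definition Xblock (k : nat -> nat) (N n j : nat) (w : outcome k N) : seq nat :=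
  take (2 ^ n) (drop (j * 2 ^ n).-1 (Xseq w)).

Definition Gle (k : nat -> nat) (N n : nat) (w : outcome k N)
  : seq {set 'I_(bnd k N) * 'I_(bnd k N)} :=
  [seq lvl w l | l <- iota 1 n].

(* Main.v *)
Require Import Defs.
From Stdlib Require Import Reals Lra.
From HB Require Import structures.
From mathcomp Require Import all_boot zify.
Set Implicit Arguments.
Unset Strict Implicit.
Unset Printing Implicit Defensive.

Section Part1.
Variable k : nat -> nat.
Variable N : nat.
Local Notation out := (outcome k N).

Lemma size_Ystr (w : out) l i : size (Ystr w l i) = 2 ^ l.
Proof.
elim: l i => [|l IH] i //=.
by rewrite size_cat !IH expnS mul2n addnn.
Qed.

Lemma sumn_pow2 m : sumn [seq 2 ^ i | i <- iota 0 m] = (2 ^ m).-1.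
Proof.
elim: m => [|m IH] //.
have -> : iota 0 m.+1 = iota 0 m ++ [:: m] by rewrite -addn1 iotaD.
rewrite map_cat sumn_cat IH /= addn0 expnS.
have := expn_gt0 2 m; lia.
Qed.

Lemma Xseq_base (w : out) m : m <= N ->
  take (2 ^ m) (drop (2 ^ m).-1 (Xseq w)) = Ystr w m (cho w m).
Proof.
move=> hm; rewrite /Xseq.
have -> : N.+1 = m + (N.+1 - m) by lia.
rewrite iotaD map_cat flatten_cat /=.
have -> : N.+1 - m = (N - m).+1 by lia.
rewrite /= drop_size_cat; last first.
  by rewrite size_flatten /shape -map_comp; under eq_map do rewrite /= size_Ystr; rewrite sumn_pow2.
by rewrite take_size_cat // size_Ystr.
Qed.

Fixpoint node (w : out) (l t d : nat) : nat :=
  match d with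
  | 0 => cho w l
  | d'.+1 => if t <= 1 then cho w l else
      let p := nth (0, 0) (pairs w l.+1) (node w l.+1 t./2 d') in
      if odd t then p.2 else p.1
  end.

Lemma Xblock_node (w : out) d : forall l t, 0 < t -> t < 2 ^ d -> t * 2 ^ l < 2 ^ N.+1 ->
  Xblock l t w = Ystr w l (node w l t d).
Proof.
elim: d => [|d IH] l t ht0 htd htN; first by rewrite expn0 in htd; lia.
rewrite /=.
case: ifP => ht1.
  have ht : t = 1 by lia.
  subst t; rewrite /Xblock mul1n Xseq_base //.
  by rewrite mul1n ltn_exp2l // in htN.
set c := t./2.
have ht : t = odd t + c.*2 by rewrite odd_double_half.
have hct : t./2 = c by [].
clearbody c.
have hc0 : 0 < c by move: ht; case: (odd t) => /=; rewrite -muln2; lia.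
have hcd : c < 2 ^ d.
  move: htd; rewrite expnS; move: ht; case: (odd t) => /= ->; rewrite -muln2; lia.
have hcN : c * 2 ^ l.+1 < 2 ^ N.+1.
  move: htN; rewrite !expnS; move: ht; case: (odd t) => /= ->; rewrite -muln2; nia.
have := IH l.+1 c hc0 hcd hcN.
rewrite /=.
set p := nth _ _ _ => hX.
have hs : size (Ystr w l p.1) = 2 ^ l by rewrite size_Ystr.
move: hX; rewrite /Xblock => hX.
case: (boolP (odd t)) ht => ho ht.
- have -> : (t * 2 ^ l).-1 = 2 ^ l + (c * 2 ^ l.+1).-1.
    rewrite ht expnS; have := expn_gt0 2 l; rewrite /=; nia.
  rewrite -drop_drop take_drop addnn -mul2n -expnS hX.
  by rewrite drop_size_cat.
- have -> : (t * 2 ^ l) = c * 2 ^ l.+1.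
    rewrite ht expnS; rewrite /=; nia.
  rewrite -(take_takel _ (_ : 2 ^ l <= 2 ^ l.+1)); last by rewrite leq_exp2l.
  by rewrite hX take_size_cat.
Qed.

End Part1.


Definition box (b K : nat) : {set 'I_b * 'I_b} :=
  [set p : 'I_b * 'I_b | (p.1 < K) && (p.2 < K)].

Definition np (b : nat) (p : 'I_b * 'I_b) : nat * nat := ((val p.1 : nat), (val p.2 : nat)).

Lemma np_inj b : injective (@np b).
Proof. by move=> [x1 x2] [y1 y2] [/val_inj -> /val_inj ->]. Qed.

Lemma lexle_total : total lexle.
Proof. move=> [a b] [c d]; rewrite /lexle /=; apply/orP; lia. Qed.
Lemma lexle_trans : transitive lexle.
Proof. move=> [a b] [c d] [e f]; rewrite /lexle /=; move=> /orP H1 /orP H2; apply/orP; lia. Qed.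
Lemma lexle_anti : antisymmetric lexle.
Proof.
move=> [a b] [c d]; rewrite /lexle /= => /andP [/orP H1 /orP H2].
have [-> ->] : a = c /\ b = d by lia. done.
Qed.

Section Part2.
Variable k : nat -> nat.
Variable N : nat.
Local Notation out := (outcome k N).
Local Notation b := (bnd k N).

Lemma k_lt_bnd l : l <= N -> k l < b.
Proof.
move=> hl; rewrite /bnd ltnS.
have -> : k l = k (@Ordinal N.+1 l hl) by [].
by apply: (@leq_bigmax _ (fun i : 'I_N.+1 => k i)).
Qed.

Lemma validP (w : out) : w \in Omega k N -> forall l, l <= N ->
  cho w l < k l /\ (0 < l -> lvl w l \subset box b (k l.-1) /\ #|lvl w l| = k l).
Proof.
rewrite inE => /forallP hv l hl.
have := hv (inord l); rewrite /cho /lvl hl inordK // => /andP [-> H]; split=> // hl0.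
move: H; rewrite (_ : (l == 0) = false); last by lia.
move=> /andP [hs /eqP hc]; split=> //.
Qed.

Lemma pairsE (w : out) l : pairs w l = sort lexle (map (@np b) (enum (lvl w l))).
Proof. by []. Qed.

Lemma pairs_uniq (w : out) l : uniq (pairs w l).
Proof. by rewrite pairsE sort_uniq map_inj_uniq ?enum_uniq //; apply: np_inj. Qed.

Lemma pairs_sorted (w : out) l : sorted lexle (pairs w l).
Proof. by rewrite pairsE; apply: sort_sorted; apply: lexle_total. Qed.

Lemma size_pairs (w : out) l : w \in Omega k N -> 0 < l <= N -> size (pairs w l) = k l.
Proof.
move=> hw /andP [h0 hl]; have [_ H] := validP hw hl.
by have [_ <-] := H h0; rewrite pairsE size_sort size_map -cardE.
Qed.

Lemma mem_pairs (w : out) l x : (x \in pairs w l) = (x \in map (@np b) (enum (lvl w l))).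
Proof. by rewrite pairsE mem_sort. Qed.

Lemma pairs_bound (w : out) l x : w \in Omega k N -> 0 < l <= N -> x \in pairs w l ->
  x.1 < k l.-1 /\ x.2 < k l.-1.
Proof.
move=> hw /andP [h0 hl]; rewrite mem_pairs => /mapP [p]; rewrite mem_enum => hp ->.
have [_ H] := validP hw hl; have [hs _] := H h0.
by move: (subsetP hs p hp); rewrite inE /= => /andP [].
Qed.

Lemma node_bound (w : out) : w \in Omega k N -> forall d l t, 0 < t -> t < 2 ^ d ->
  t * 2 ^ l < 2 ^ N.+1 -> node w l t d < k l.
Proof.
move=> hw; elim=> [|d IH] l t ht0 htd htN; first by rewrite expn0 in htd; lia.
have hlN : l <= N.
  have : 2 ^ l < 2 ^ N.+1 by apply: leq_ltn_trans htN; rewrite leq_pmull.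
  by rewrite ltn_exp2l.
rewrite /=; case: ifP => ht1; first by have [] := validP hw hlN.
set c := t./2.
have ht : t = odd t + c.*2 by rewrite odd_double_half.
clearbody c.
have hc0 : 0 < c by move: ht; case: (odd t) => /=; rewrite -muln2; lia.
have hcd : c < 2 ^ d.
  move: htd; rewrite expnS; move: ht; case: (odd t) => /= ->; rewrite -muln2; lia.
have hcN : c * 2 ^ l.+1 < 2 ^ N.+1.
  move: htN; rewrite !expnS; move: ht; case: (odd t) => /= ->; rewrite -muln2; nia.
have hl1 : l.+1 <= N.
  have : 2 ^ l.+1 < 2 ^ N.+1 by apply: leq_ltn_trans hcN; rewrite leq_pmull.
  by rewrite ltn_exp2l.
have hi := IH l.+1 c hc0 hcd hcN.
rewrite -(size_pairs hw (l := l.+1)) in hi; last by rewrite hl1.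
have := pairs_bound hw (_ : 0 < l.+1 <= N) (mem_nth (0, 0) hi).
by move=> /(_ hl1) [h1 h2]; case: (odd t).
Qed.

End Part2.


Section Part3.
Variable k : nat -> nat.
Variable N : nat.
Local Notation out := (outcome k N).
Local Notation b := (bnd k N).

Lemma Gle_lvl (w w' : out) n l : Gle n w = Gle n w' -> 0 < l <= n -> lvl w l = lvl w' l.
Proof.
move=> h /andP [h0 hl].
have := congr1 (fun s => nth set0 s l.-1) h; rewrite /Gle /=.
rewrite !(nth_map 0) ?size_iota; try lia.
rewrite nth_iota; last lia.
by have -> : 1 + l.-1 = l by lia.
Qed.

Lemma Ystr_loc (w w' : out) n : Gle n w = Gle n w' -> forall l i, l <= n -> Ystr w l i = Ystr w' l i.
Proof.
move=> h; elim=> [|l IH] i hl //=.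
have -> : pairs w l.+1 = pairs w' l.+1 by rewrite !pairsE (Gle_lvl h) //; lia.
by rewrite !IH //; lia.
Qed.

Lemma Ystr_inj (w : out) : w \in Omega k N -> forall l i i', l <= N -> i < k l -> i' < k l ->
  Ystr w l i = Ystr w l i' -> i = i'.
Proof.
move=> hw; elim=> [|l IH] i i' hl hi hi' /=; first by case.
set p := nth _ _ i; set p' := nth _ _ i'.
move/eqP; rewrite eqseq_cat ?size_Ystr // => /andP [/eqP e1 /eqP e2].
have hl' : 0 < l.+1 <= N by lia.
rewrite -(size_pairs hw hl') in hi hi'.
have [a1 a2] := pairs_bound hw hl' (mem_nth (0, 0) hi).
have [b1 b2] := pairs_bound hw hl' (mem_nth (0, 0) hi').
have E1 := IH _ _ (ltnW hl) a1 b1 e1.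
have E2 := IH _ _ (ltnW hl) a2 b2 e2.
apply/eqP; rewrite -(nth_uniq (0, 0) hi hi' (pairs_uniq w l.+1)).
by rewrite -/p -/p' [p]surjective_pairing [p']surjective_pairing E1 E2.
Qed.

End Part3.


Definition good (K : nat) (f : nat -> nat) :=
  (forall x, x < K -> f x < K) /\ (forall x y, x < K -> y < K -> f x = f y -> x = y).

Definition hp (h : (nat -> nat) * (nat -> nat)) (x : nat * nat) : nat * nat := (h.1 x.1, h.2 x.2).

Lemma liftn_val (b : nat) (f : nat -> nat) (x : 'I_b) : f x < b -> val (insubd x (f x) : 'I_b) = f x.
Proof. by move=> h; rewrite val_insubd h. Qed.

Section Part4.
Variable k : nat -> nat.
Variable N : nat.
Local Notation out := (outcome k N).
Local Notation b := (bnd k N).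
Variable n : nat.
Variables sg rh : nat -> nat.
Hypothesis sg_good : good (k n) sg.
Hypothesis rh_good : good (k n) rh.

Definition liftn (f : nat -> nat) (x : 'I_b) : 'I_b := insubd x (f x).
Definition liftp (h : (nat -> nat) * (nat -> nat)) (p : 'I_b * 'I_b) : 'I_b * 'I_b :=
  (liftn h.1 p.1, liftn h.2 p.2).

Definition tau (w : out) l h (i : nat) : nat :=
  index (hp h (nth (0, 0) (pairs w l) i)) (sort lexle (map (hp h) (pairs w l))).

Fixpoint hs (w : out) l : (nat -> nat) * (nat -> nat) :=
  match l with
  | 0 => (sg, rh)
  | l'.+1 => if l' <= n then (sg, rh) else let t := tau w l' (hs w l') in (t, t)
  end.

Definition hc (w : out) l : nat -> nat := if l == n then rh else tau w l (hs w l).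

Definition Phi (w : out) : out :=
  ([ffun l : 'I_N.+1 => if n < l then [set liftp (hs w l) p | p in w.1 l] else w.1 l],
   [ffun l : 'I_N.+1 => if n <= l then liftn (hc w l) (w.2 l) else w.2 l]).

Lemma tau_good (w : out) l h : w \in Omega k N -> 0 < l <= N ->
  good (k l.-1) h.1 -> good (k l.-1) h.2 ->
  good (k l) (tau w l h) /\
  (forall i, i < k l -> nth (0, 0) (sort lexle (map (hp h) (pairs w l))) (tau w l h i)
                          = hp h (nth (0, 0) (pairs w l) i)).
Proof.
move=> hw hl [g1 i1] [g2 i2].
have hs := size_pairs hw hl.
have hm : forall i, i < k l -> hp h (nth (0, 0) (pairs w l) i) \in sort lexle (map (hp h) (pairs w l)).
  by move=> i hi; rewrite mem_sort map_f // mem_nth // hs.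
split; [split|] => [i hi|i j hi hj|i hi].
- have E : k l = size (sort lexle (map (hp h) (pairs w l))) by rewrite size_sort size_map hs.
  by rewrite /tau E index_mem hm.
- rewrite /tau => e.
  have := nth_index (0, 0) (hm i hi); rewrite e nth_index ?hm //.
  rewrite -hs in hi hj.
  have [a1 a2] := pairs_bound hw hl (mem_nth (0, 0) hi).
  have [b1 b2] := pairs_bound hw hl (mem_nth (0, 0) hj).
  move=> [] /i1 - /(_ b1 a1) E1 /i2 - /(_ b2 a2) E2.
  apply/eqP; rewrite -(nth_uniq (0, 0) hi hj (pairs_uniq w l)).
  by rewrite [nth _ _ j]surjective_pairing [nth _ _ i]surjective_pairing E1 E2.
- by rewrite /tau nth_index // hm.
Qed.

Lemma hs_good (w : out) : w \in Omega k N -> forall l, n < l <= N ->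
  good (k l.-1) (hs w l).1 /\ good (k l.-1) (hs w l).2.
Proof.
move=> hw; elim=> [|l IH] hl; first by lia.
rewrite /=; case: ifP => hln.
  by have -> : l = n by lia.
have hl1 : n < l <= N by lia.
have hl2 : 0 < l <= N by lia.
have [G1 G2] := IH hl1.
by have [G _] := tau_good hw hl2 G1 G2.
Qed.

Lemma hc_good (w : out) l : w \in Omega k N -> n <= l <= N -> good (k l) (hc w l).
Proof.
move=> hw hl; rewrite /hc; case: eqP => [->|hne] //.
have hl1 : n < l <= N by lia.
have hl2 : 0 < l <= N by lia.
have [G1 G2] := hs_good hw hl1.
by have [] := tau_good hw hl2 G1 G2.
Qed.


Lemma lvl_bound (w : out) l p : w \in Omega k N -> 0 < l <= N -> p \in lvl w l ->
  p.1 < k l.-1 /\ p.2 < k l.-1.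
Proof.
move=> hw /andP [h0 hl] hp.
have [_ H] := validP hw hl; have [hs _] := H h0.
by move: (subsetP hs p hp); rewrite inE => /andP [].
Qed.

Lemma liftp_np h K (p : 'I_b * 'I_b) : K <= b -> good K h.1 -> good K h.2 ->
  p.1 < K -> p.2 < K -> np (liftp h p) = hp h (np p).
Proof.
move=> hK [g1 _] [g2 _] h1 h2; rewrite /np /liftp /liftn /hp /=.
by rewrite !liftn_val //; apply: leq_trans hK; [apply: g2 | apply: g1].
Qed.

Lemma liftp_inj h K (p q : 'I_b * 'I_b) : K <= b -> good K h.1 -> good K h.2 ->
  p.1 < K -> p.2 < K -> q.1 < K -> q.2 < K -> liftp h p = liftp h q -> p = q.
Proof.
move=> hK G1 G2 p1 p2 q1 q2 e.
have := congr1 (@np b) e; rewrite !(liftp_np hK G1 G2) //.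
case: G1 G2 => [_ i1] [_ i2] [] /i1 - /(_ p1 q1) E1 /i2 - /(_ p2 q2) E2.
by apply: np_inj; rewrite /np; congr (_, _).
Qed.

Lemma lvl_Phi_low (w : out) l : l <= n -> lvl (Phi w) l = lvl w l.
Proof.
move=> hl; rewrite /lvl; case: ifP => // hlN.
by rewrite ffunE inordK // (_ : n < l = false) //; lia.
Qed.

Lemma Gle_Phi (w : out) : Gle n (Phi w) = Gle n w.
Proof.
rewrite /Gle; apply/eq_in_map => l; rewrite mem_iota => hl.
by apply: lvl_Phi_low; lia.
Qed.

Lemma lvl_Phi_high (w : out) l : n < l <= N -> lvl (Phi w) l = [set liftp (hs w l) p | p in lvl w l].
Proof.
move=> /andP [h1 h2]; rewrite /lvl h2 ffunE inordK // h1.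
by [].
Qed.

Lemma pairs_Phi (w : out) l : w \in Omega k N -> n < l <= N ->
  pairs (Phi w) l = sort lexle (map (hp (hs w l)) (pairs w l)).
Proof.
move=> hw hl.
have hl0 : 0 < l <= N by lia.
have [G1 G2] := hs_good hw hl.
have hK : k l.-1 <= b by apply: ltnW; apply: k_lt_bnd; lia.
rewrite pairsE lvl_Phi_high //.
apply/perm_sort_inP.
- by move=> x y _ _; apply: lexle_total.
- by move=> x y z _ _ _; apply: lexle_trans.
- by move=> x y _ _; apply: lexle_anti.
apply: uniq_perm.
- by rewrite map_inj_uniq ?enum_uniq //; apply: np_inj.
- rewrite map_inj_in_uniq ?pairs_uniq // => x y hx hy.
  have [a1 a2] := pairs_bound hw hl0 hx.
  have [b1 b2] := pairs_bound hw hl0 hy.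
  case: G1 G2 => [_ i1] [_ i2] [] /i1 - /(_ a1 b1) E1 /i2 - /(_ a2 b2) E2.
  by rewrite [x]surjective_pairing [y]surjective_pairing E1 E2.
- move=> x; apply/mapP/mapP.
  + move=> [q]; rewrite mem_enum => /imsetP [p hp ->] ->.
    have [p1 p2] := lvl_bound hw hl0 hp.
    exists (np p); first by rewrite mem_pairs map_f // mem_enum.
    by rewrite (liftp_np hK G1 G2).
  + move=> [y]; rewrite mem_pairs => /mapP [p]; rewrite mem_enum => hp -> ->.
    have [p1 p2] := lvl_bound hw hl0 hp.
    exists (liftp (hs w l) p); first by rewrite mem_enum imset_f.
    by rewrite (liftp_np hK G1 G2).
Qed.

Lemma cho_Phi (w : out) l : w \in Omega k N -> n <= l <= N -> cho (Phi w) l = hc w l (cho w l).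
Proof.
move=> hw /andP [h1 h2].
have hl : n <= l <= N by rewrite h1 h2.
have [g _] := hc_good hw hl.
have [hcl _] := validP hw h2.
rewrite /cho h2 in hcl.
rewrite /cho h2 ffunE inordK // h1 /liftn val_insubd.
by rewrite (leq_trans (g _ hcl) (ltnW (@k_lt_bnd k N l h2))).
Qed.


Lemma ord_leN (l : 'I_N.+1) : (l : nat) <= N.
Proof. by rewrite -ltnS. Qed.

Lemma lvl_ord (w : out) (l : 'I_N.+1) : lvl w l = w.1 l.
Proof. by rewrite /lvl ord_leN inord_val. Qed.

Lemma cho_ord (w : out) (l : 'I_N.+1) : cho w l = w.2 l.
Proof. by rewrite /cho ord_leN inord_val. Qed.

Lemma validO (w : out) : w \in Omega k N -> forall l : 'I_N.+1,
  (w.2 l < k l) &&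
  (if (l : nat) == 0 then w.1 l == set0
   else (w.1 l \subset [set p : 'I_b * 'I_b | (p.1 < k (l : nat).-1) && (p.2 < k (l : nat).-1)])
        && (#|w.1 l| == k l)).
Proof. by rewrite inE => /forallP. Qed.

Lemma Phi2_bound (w : out) (l : 'I_N.+1) : w \in Omega k N -> (Phi w).2 l < k l.
Proof.
move=> hw; have /andP [hc0 _] := validO hw l.
have hlN := ord_leN l.
rewrite ffunE; case: ifP => // hnl.
have hl : n <= l <= N by rewrite hnl hlN.
have [g _] := hc_good hw hl.
rewrite -cho_ord in hc0.
rewrite /liftn val_insubd -cho_ord.
by rewrite (leq_trans (g _ hc0) (ltnW (@k_lt_bnd k N l hlN))) g.
Qed.

Lemma Phi1_zero (w : out) (l : 'I_N.+1) : w \in Omega k N -> (l : nat) == 0 -> (Phi w).1 l == set0.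
Proof.
move=> hw hlz; have /andP [_ H] := validO hw l.
rewrite hlz in H.
rewrite ffunE; have hn0 : (n < l) = false by move/eqP: hlz => ->.
by rewrite hn0.
Qed.

Lemma Phi1_ok (w : out) (l : 'I_N.+1) : w \in Omega k N -> (l : nat) != 0 ->
  ((Phi w).1 l \subset [set p : 'I_b * 'I_b | (p.1 < k (l : nat).-1) && (p.2 < k (l : nat).-1)])
        && (#|(Phi w).1 l| == k l).
Proof.
move=> hw hlz; have /andP [_ H] := validO hw l.
rewrite (negbTE hlz) in H.
have hlN := ord_leN l.
rewrite ffunE; case: ifP => hnl //.
move: H => /andP [_ /eqP hcard].
have hl : n < l <= N by rewrite hnl hlN.
have hl0 : 0 < l <= N by lia.
have [G1 G2] := hs_good hw hl.
have hK : k (l : nat).-1 <= b by apply: ltnW; apply: k_lt_bnd; lia.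
rewrite -lvl_ord; apply/andP; split.
  apply/subsetP => q /imsetP [p hp ->]; rewrite inE.
  have [p1 p2] := lvl_bound hw hl0 hp.
  have := liftp_np hK G1 G2 p1 p2; rewrite /np /hp => -[-> ->] /=.
  by case: G1 G2 => [g1 _] [g2 _]; rewrite g1 ?g2.
rewrite card_in_imset ?lvl_ord ?hcard //.
move=> p q hp hq; rewrite -lvl_ord in hp hq.
have [p1 p2] := lvl_bound hw hl0 hp.
have [q1 q2] := lvl_bound hw hl0 hq.
exact: liftp_inj hK G1 G2 p1 p2 q1 q2.
Qed.

Lemma Phi_in (w : out) : w \in Omega k N -> Phi w \in Omega k N.
Proof.
move=> hw; rewrite inE; apply/forallP => l; apply/andP; split; first exact: Phi2_bound.
case: (boolP ((l : nat) == 0)) => hlz; first exact: Phi1_zero.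
exact: Phi1_ok.
Qed.

Lemma node_Phi (w : out) : w \in Omega k N -> forall d l t, 0 < t -> t < 2 ^ d ->
  t * 2 ^ l < 2 ^ N.+1 -> n <= l ->
  node (Phi w) l t d = (if n < l then hc w l else if odd t then rh else sg) (node w l t d).
Proof.
move=> hw; elim=> [|d IH] l t ht0 htd htN hnl; first by rewrite expn0 in htd; lia.
have hlN : l <= N.
  have : 2 ^ l < 2 ^ N.+1 by apply: leq_ltn_trans htN; rewrite leq_pmull.
  by rewrite ltn_exp2l.
rewrite /=; case: ifP => ht1.
  rewrite cho_Phi ?hnl ?hlN //; case: ifP => // hnl'.
  have -> : l = n by lia.
  have -> : t = 1 by lia.
  by rewrite /hc eqxx.
set c := t./2.
have ht : t = odd t + c.*2 by rewrite odd_double_half.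
clearbody c.
have hc0 : 0 < c by move: ht; case: (odd t) => /=; rewrite -muln2; lia.
have hcd : c < 2 ^ d.
  move: htd; rewrite expnS; move: ht; case: (odd t) => /= ->; rewrite -muln2; lia.
have hcN : c * 2 ^ l.+1 < 2 ^ N.+1.
  move: htN; rewrite !expnS; move: ht; case: (odd t) => /= ->; rewrite -muln2; nia.
have hl1 : l.+1 <= N.
  have : 2 ^ l.+1 < 2 ^ N.+1 by apply: leq_ltn_trans hcN; rewrite leq_pmull.
  by rewrite ltn_exp2l.
have hl1' : n < l.+1 <= N by rewrite hl1 andbT ltnS.
have hl10 : 0 < l.+1 <= N by rewrite hl1.
rewrite (IH l.+1 c hc0 hcd hcN (leqW hnl)) ltnS hnl.
rewrite (pairs_Phi hw hl1').
have [G1 G2] := hs_good hw hl1'.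
have [_ T2] := tau_good hw hl10 G1 G2.
have hnd := node_bound hw hc0 hcd hcN.
rewrite /hc (_ : (l.+1 == n) = false); last by lia.
rewrite T2 //= /hp /=.
case: (leqP l n) => hln.
  by case: (odd t).
have hne : (l == n) = false by apply/negbTE; rewrite neq_ltn hln orbT.
by rewrite hne; case: (odd t).
Qed.

Lemma hs_ext (w w' : out) l : (forall l', l' < l -> pairs w l' = pairs w' l') -> hs w l = hs w' l.
Proof.
elim: l => [|l IH] h //=.
case: ifP => // _.
rewrite IH; last by move=> l' hl'; apply: h; lia.
by rewrite /tau h.
Qed.

Lemma cho_Phi_low (w : out) l : l < n -> cho (Phi w) l = cho w l.
Proof.
move=> hl; rewrite /cho; case: ifP => // hlN.
by rewrite ffunE inordK // (_ : n <= l = false) //; lia.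
Qed.

Lemma Phi_inj (w w' : out) : w \in Omega k N -> w' \in Omega k N -> Phi w = Phi w' -> w = w'.
Proof.
move=> hw hw' e.
have Hl : forall l, lvl w l = lvl w' l.
  elim/ltn_ind => l IH.
  case: (leqP l n) => hln; first by rewrite -(lvl_Phi_low w hln) -(lvl_Phi_low w' hln) e.
  case: (leqP l N) => hlN; last by rewrite /lvl (_ : l <= N = false) //; lia.
  have hl : n < l <= N by rewrite hln hlN.
  have hl0 : 0 < l <= N by lia.
  have hh : hs w l = hs w' l by apply: hs_ext => l' hl'; rewrite !pairsE IH.
  have := congr1 (fun w => lvl w l) e; rewrite /= !lvl_Phi_high // -hh => E.
  have [G1 G2] := hs_good hw hl.
  have hK : k l.-1 <= b by apply: ltnW; apply: k_lt_bnd; lia.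
  apply/setP => p; apply/idP/idP => hp.
  - have := imset_f (liftp (hs w l)) hp; rewrite E => /imsetP [q hq eq].
    have [p1 p2] := lvl_bound hw hl0 hp.
    have [q1 q2] := lvl_bound hw' hl0 hq.
    by rewrite (liftp_inj hK G1 G2 p1 p2 q1 q2 eq).
  - have := imset_f (liftp (hs w l)) hp; rewrite -E => /imsetP [q hq eq].
    have [p1 p2] := lvl_bound hw' hl0 hp.
    have [q1 q2] := lvl_bound hw hl0 hq.
    by rewrite (liftp_inj hK G1 G2 p1 p2 q1 q2 eq).
have Hp : forall l, pairs w l = pairs w' l by move=> l; rewrite !pairsE Hl.
have Hc : forall l, l <= N -> cho w l = cho w' l.
  move=> l hlN.
  case: (ltnP l n) => hln; first by rewrite -(cho_Phi_low w hln) -(cho_Phi_low w' hln) e.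
  have hl : n <= l <= N by rewrite hln hlN.
  have := congr1 (fun w => cho w l) e; rewrite /= !cho_Phi //.
  have hh : hs w l = hs w' l by apply: hs_ext => l' _; apply: Hp.
  have hcc : hc w l = hc w' l by rewrite /hc hh /tau Hp.
  rewrite hcc => E.
  have [_ I] := hc_good hw' hl.
  have [c1 _] := validP hw hlN.
  have [c2 _] := validP hw' hlN.
  exact: I c1 c2 E.
move: w w' hw hw' e Hl Hc {Hp} => [w1 w2] [w1' w2'] hw hw' e Hl Hc.
congr (_, _); apply/ffunP => l.
  by have := Hl l; rewrite !lvl_ord.
by apply: val_inj; have := Hc l (ord_leN l); rewrite !cho_ord.
Qed.

End Part4.


Definition sw (x y z : nat) : nat := if z == x then y else if z == y then x else z.

Lemma sw_inv x y z : sw x y (sw x y z) = z.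
Proof.
rewrite /sw; case: (z =P x) => [->|h1].
  case: (y =P x) => [->|h2]; first by [].
  by rewrite eqxx.
case: (z =P y) => [->|h3].
  by rewrite eqxx.
by rewrite (introF eqP h1) (introF eqP h3).
Qed.

Lemma sw_good K x y : x < K -> y < K -> good K (sw x y).
Proof.
move=> hx hy; split.
  by move=> z hz; rewrite /sw; case: eqP => // _; case: eqP.
by move=> z z' _ _ e; rewrite -(sw_inv x y z) e sw_inv.
Qed.

Lemma sw_l x y : sw x y x = y.
Proof. by rewrite /sw eqxx. Qed.

Section Part5.
Variable k : nat -> nat.
Variables N n j : nat.
Hypothesis hj : 0 < j.
Hypothesis hN : j.+2 * 2 ^ n <= 2 ^ N.+1.
Local Notation out := (outcome k N).
Local Notation d := N.+1.

Lemma hjN : j * 2 ^ n < 2 ^ N.+1.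
Proof. have := expn_gt0 2 n; nia. Qed.
Lemma hj1N : j.+1 * 2 ^ n < 2 ^ N.+1.
Proof. have := expn_gt0 2 n; nia. Qed.
Lemma hjd : j < 2 ^ d.
Proof. have := hjN; have := expn_gt0 2 n; nia. Qed.
Lemma hj1d : j.+1 < 2 ^ d.
Proof. have := hj1N; have := expn_gt0 2 n; nia. Qed.
Lemma hnN : n <= N.
Proof.
have : 2 ^ n < 2 ^ N.+1 by apply: leq_ltn_trans hjN; rewrite leq_pmull.
by rewrite ltn_exp2l.
Qed.

Definition fiber g a c : {set out} :=
  [set w in Omega k N | (Gle n w == g) && (node w n j d == a) && (node w n j.+1 d == c)].

Lemma inFiber g a c w : (w \in fiber g a c) =
  (w \in Omega k N) && ((Gle n w == g) && (node w n j d == a) && (node w n j.+1 d == c)).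
Proof. by rewrite /fiber in_set. Qed.

Lemma fiber_le g a c a' c' : a < k n -> c < k n -> a' < k n -> c' < k n ->
  #|fiber g a c| <= #|fiber g a' c'|.
Proof.
move=> ha hc ha' hc'.
pose sg := if odd j then sw c c' else sw a a'.
pose rh := if odd j then sw a a' else sw c c'.
have Gs : good (k n) sg by rewrite /sg; case: ifP => _; apply: sw_good.
have Gr : good (k n) rh by rewrite /rh; case: ifP => _; apply: sw_good.
rewrite -(card_in_imset (f := Phi n sg rh)); last first.
  move=> w w'; rewrite !inFiber => /andP [hw _] /andP [hw' _].
  by move=> E; move: (Phi_inj Gs Gr hw hw'); apply.
apply: subset_leq_card; apply/subsetP => w' /imsetP [w]; rewrite inFiber.
move=> /andP [hw /andP [/andP [/eqP hg /eqP ea] /eqP ec]] ->.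
rewrite inFiber (Phi_in Gs Gr hw) Gle_Phi hg eqxx.
rewrite (node_Phi Gs Gr hw hj hjd hjN (leqnn n)) (node_Phi Gs Gr hw (ltn0Sn j) hj1d hj1N (leqnn n)).
rewrite ltnn ea ec /= /sg /rh.
by case: (odd j) => /=; rewrite !sw_l !eqxx.
Qed.

Lemma fiber_eq g a c a' c' : a < k n -> c < k n -> a' < k n -> c' < k n ->
  #|fiber g a c| = #|fiber g a' c'|.
Proof. by move=> *; apply/eqP; rewrite eqn_leq !fiber_le. Qed.

End Part5.


Lemma card_part_lt (T : finType) (A : {set T}) (f : T -> nat) m :
  #|[set w in A | f w < m]| = \sum_(a < m) #|[set w in A | f w == a]|.
Proof.
elim: m => [|m IH].
  rewrite big_ord0; apply/eqP; rewrite cards_eq0; apply/eqP/setP => w.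
  by rewrite !inE andbF.
rewrite big_ord_recr /= -IH.
rewrite -(cardsID [set w in A | f w == m] [set w in A | f w < m.+1]).
have -> : [set w in A | f w < m.+1] :&: [set w in A | f w == m] = [set w in A | f w == m].
  apply/setP => w; rewrite !inE; case: (w \in A) => //=.
  by apply/idP/idP; lia.
have -> : [set w in A | f w < m.+1] :\: [set w in A | f w == m] = [set w in A | f w < m].
  apply/setP => w; rewrite !inE; case: (w \in A) => //=.
  by apply/idP/idP; lia.
by rewrite addnC.
Qed.

Lemma card_part (T : finType) (A : {set T}) (f : T -> nat) K :
  (forall w, w \in A -> f w < K) -> #|A| = \sum_(a < K) #|[set w in A | f w == a]|.
Proof.
move=> h; rewrite -card_part_lt.
have -> : [set w in A | f w < K] = A.
  apply/setP => w; rewrite inE.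
  by case: (boolP (w \in A)) => // /h ->.
by [].
Qed.

Lemma card_lt_ord b K : K <= b -> #|[set x : 'I_b | x < K]| = K.
Proof.
move=> hK.
have -> : [set x : 'I_b | x < K] = [set widen_ord hK x | x in [set: 'I_K]].
  apply/setP => x; rewrite inE; apply/idP/imsetP.
  - by move=> hx; exists (Ordinal hx); rewrite ?inE //; apply: val_inj.
  - by move=> [y _ ->] /=.
rewrite card_imset ?cardsT ?card_ord //.
by move=> x y /(congr1 val) /= /val_inj.
Qed.

Lemma card_box b K : K <= b -> #|box b K| = K * K.
Proof.
move=> hK.
have -> : box b K = setX [set x : 'I_b | x < K] [set x : 'I_b | x < K].
  by apply/setP => p; rewrite !inE.
by rewrite cardsX card_lt_ord.
Qed.

Lemma Omega_nonempty (k : nat -> nat) N :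
  (forall n, 0 < k n) -> (forall n, k n.+1 <= k n ^ 2) -> exists w, w \in Omega k N.
Proof.
move=> hpos hsq.
pose ch (l : 'I_N.+1) : {set 'I_(bnd k N) * 'I_(bnd k N)} :=
  [set x in take (k l) (enum (box (bnd k N) (k (l : nat).-1)))].
pose o0 : 'I_(bnd k N) := @Ordinal (bnd k N) 0 (ltn0Sn _).
exists ([ffun l : 'I_N.+1 => if (l : nat) == 0 then set0 else ch l], [ffun l : 'I_N.+1 => o0]).
rewrite inE; apply/forallP => l; rewrite !ffunE; apply/andP; split; first exact: hpos.
case: (boolP ((l : nat) == 0)) => hl0 //.
have hK : k (l : nat).-1 <= bnd k N.
  apply: ltnW; apply: k_lt_bnd; have := ltn_ord l; lia.
have hkl : k l <= size (enum (box (bnd k N) (k (l : nat).-1))).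
  rewrite -cardE card_box // mulnn.
  have -> : (l : nat) = (l : nat).-1.+1 by lia.
  by rewrite /= hsq.
apply/andP; split.
  apply/subsetP => p; rewrite /ch inE => /mem_take; rewrite mem_enum.
  by rewrite inE.
rewrite /ch cardsE; apply/eqP.
have /card_uniqP -> : uniq (take (k l) (enum (box (bnd k N) (k (l : nat).-1)))).
  by apply: take_uniq; apply: enum_uniq.
by rewrite size_takel.
Qed.


Lemma inSet (T : finType) (A : {set T}) (P : pred T) x : (x \in [set y in A | P y]) = (x \in A) && P x.
Proof. by rewrite in_set. Qed.

Section Part7.
Variable k : nat -> nat.
Variables N n j : nat.
Hypothesis hj : 0 < j.
Hypothesis hN : j.+2 * 2 ^ n <= 2 ^ N.+1.
Hypothesis hkn : 0 < k n.
Local Notation out := (outcome k N).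
Local Notation Om := (Omega k N).
Local Notation X := (@Xblock k N n j).
Local Notation Y := (@Xblock k N n j.+1).
Local Notation Z := (@Gle k N n).
Local Notation nd t w := (node w n t N.+1).

Lemma KX (w w' : out) : w \in Om -> w' \in Om -> Z w' = Z w ->
  (X w' == X w) = (nd j w' == nd j w).
Proof.
move=> hw hw' hz.
have hnN := hnN hj hN.
rewrite !(Xblock_node _ hj (hjd hj hN) (hjN hj hN)) (Ystr_loc hz) //.
apply/eqP/eqP => [E|->] //.
move: E; apply: (Ystr_inj hw hnN).
  exact: (node_bound hw' hj (hjd hj hN) (hjN hj hN)).
exact: (node_bound hw hj (hjd hj hN) (hjN hj hN)).
Qed.

Lemma KY (w w' : out) : w \in Om -> w' \in Om -> Z w' = Z w ->
  (Y w' == Y w) = (nd j.+1 w' == nd j.+1 w).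
Proof.
move=> hw hw' hz.
have hnN := hnN hj hN.
rewrite !(Xblock_node _ (ltn0Sn j) (hj1d hj hN) (hj1N hj hN)) (Ystr_loc hz) //.
apply/eqP/eqP => [E|->] //.
move: E; apply: (Ystr_inj hw hnN).
  exact: (node_bound hw' (ltn0Sn j) (hj1d hj hN) (hj1N hj hN)).
exact: (node_bound hw (ltn0Sn j) (hj1d hj hN) (hj1N hj hN)).
Qed.

Definition FF g := #|@fiber k N n j g 0 0|.

Lemma fib (g : seq {set 'I_(bnd k N) * 'I_(bnd k N)}) a c : a < k n -> c < k n ->
  #|@fiber k N n j g a c| = FF g.
Proof. by move=> ha hc; rewrite /FF (@fiber_eq k N n j hj hN g a c 0 0). Qed.

Lemma ndb t (w : out) : w \in Om -> 0 < t -> t * 2 ^ n < 2 ^ N.+1 -> nd t w < k n.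
Proof.
move=> hw ht htN; apply: (node_bound hw ht _ htN).
have := expn_gt0 2 n; have : t < 2 ^ N.+1 by apply: leq_ltn_trans htN; rewrite leq_pmulr // expn_gt0.
by [].
Qed.

Lemma cZ (w : out) : w \in Om ->
  #|[set w' in Om | Z w' == Z w]| = k n * (k n * FF (Z w)).
Proof.
move=> hw.
rewrite (@card_part _ _ (fun w' => nd j w') (k n)); last first.
  by move=> w'; rewrite inSet => /andP [hw' _]; apply: ndb hw' hj (hjN hj hN).
rewrite (eq_bigr (fun _ => k n * FF (Z w))); first by rewrite sum_nat_const card_ord.
move=> a _.
rewrite (@card_part _ _ (fun w' => nd j.+1 w') (k n)); last first.
  by move=> w'; rewrite !inSet => /andP [/andP [hw' _] _]; apply: ndb hw' (ltn0Sn j) (hj1N hj hN).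
rewrite (eq_bigr (fun _ => FF (Z w))); first by rewrite sum_nat_const card_ord.
move=> c _.
rewrite -(fib (Z w) (ltn_ord a) (ltn_ord c)); apply: eq_card => w'.
by rewrite inFiber !inSet !andbA.
Qed.


Lemma cXZ (w : out) : w \in Om ->
  #|[set w' in Om | (X w' == X w) && (Z w' == Z w)]| = k n * FF (Z w).
Proof.
move=> hw.
rewrite (@card_part _ _ (fun w' => nd j.+1 w') (k n)); last first.
  by move=> w'; rewrite inSet => /andP [hw' _]; apply: ndb hw' (ltn0Sn j) (hj1N hj hN).
rewrite (eq_bigr (fun _ => FF (Z w))); first by rewrite sum_nat_const card_ord.
move=> c _.
rewrite -(fib (Z w) (ndb hw hj (hjN hj hN)) (ltn_ord c)); apply: eq_card => w'.
rewrite inFiber !inSet; case: (boolP (w' \in Om)) => hw' //=.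
case: (Z w' =P Z w) => hz; last by rewrite !andbF.
by rewrite (KX hw hw' hz) andbT.
Qed.

Lemma cYZ (w : out) : w \in Om ->
  #|[set w' in Om | (Y w', Z w') == (Y w, Z w)]| = k n * FF (Z w).
Proof.
move=> hw.
rewrite (@card_part _ _ (fun w' => nd j w') (k n)); last first.
  by move=> w'; rewrite inSet => /andP [hw' _]; apply: ndb hw' hj (hjN hj hN).
rewrite (eq_bigr (fun _ => FF (Z w))); first by rewrite sum_nat_const card_ord.
move=> a _.
rewrite -(fib (Z w) (ltn_ord a) (ndb hw (ltn0Sn j) (hj1N hj hN))); apply: eq_card => w'.
rewrite inFiber !inSet xpair_eqE; case: (boolP (w' \in Om)) => hw' //=.
case: (Z w' =P Z w) => hz; last by rewrite !andbF.
rewrite (KY hw hw' hz) andbT /=.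
by rewrite andbC.
Qed.

Lemma cXYZ (w : out) : w \in Om ->
  #|[set w' in Om | (X w' == X w) && ((Y w', Z w') == (Y w, Z w))]| = FF (Z w).
Proof.
move=> hw.
rewrite -(fib (Z w) (ndb hw hj (hjN hj hN)) (ndb hw (ltn0Sn j) (hj1N hj hN))); apply: eq_card => w'.
rewrite inFiber !inSet xpair_eqE; case: (boolP (w' \in Om)) => hw' //=.
case: (Z w' =P Z w) => hz; last by rewrite !andbF.
rewrite (KX hw hw' hz) (KY hw hw' hz) !andbT /=.
by [].
Qed.

Lemma FF_pos (w : out) : w \in Om -> 0 < FF (Z w).
Proof.
move=> hw.
rewrite -(fib (Z w) (ndb hw hj (hjN hj hN)) (ndb hw (ltn0Sn j) (hj1N hj hN))).
by apply/card_gt0P; exists w; rewrite inFiber hw !eqxx.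
Qed.

End Part7.


Lemma sumR_const (T : finType) (A : {set T}) (c : R) :
  \big[Rplus/R0]_(w in A) c = Rmult (INR #|A|) c.
Proof.
rewrite big_const; elim: #|A| => [|m IH]; first by rewrite /= Rmult_0_l.
by rewrite iterS IH S_INR; ring.
Qed.

Lemma INR_mul a c : INR (a * c) = Rmult (INR a) (INR c).
Proof. by rewrite -mult_INR. Qed.

Lemma ratio K F : 0 < K -> 0 < F ->
  Ropp (ln (Rdiv (INR (K * F)) (INR (K * (K * F))))) = ln (INR K).
Proof.
move=> hK hF.
have hK' : Rlt 0 (INR K) by apply: lt_0_INR; apply/ltP.
have hF' : Rlt 0 (INR F) by apply: lt_0_INR; apply/ltP.
rewrite !INR_mul.
have -> : Rdiv (Rmult (INR K) (INR F)) (Rmult (INR K) (Rmult (INR K) (INR F))) = Rinv (INR K).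
  field; split; apply: Rgt_not_eq; lra.
by rewrite ln_Rinv // Ropp_involutive.
Qed.

Lemma ratio1 K F : 0 < K -> 0 < F ->
  Ropp (ln (Rdiv (INR F) (INR (K * F)))) = ln (INR K).
Proof.
move=> hK hF.
have hK' : Rlt 0 (INR K) by apply: lt_0_INR; apply/ltP.
have hF' : Rlt 0 (INR F) by apply: lt_0_INR; apply/ltP.
rewrite !INR_mul.
have -> : Rdiv (INR F) (Rmult (INR K) (INR F)) = Rinv (INR K).
  field; split; apply: Rgt_not_eq; lra.
by rewrite ln_Rinv // Ropp_involutive.
Qed.

Theorem proposition6 (k : nat -> nat)
  (hpos : forall n, 0 < k n)
  (hmono : forall n, k n <= k n.+1)
  (hsq : forall n, k n.+1 <= k n ^ 2)
  (n j N : nat) (hj : 0 < j) (hN : j.+2 * 2 ^ n <= 2 ^ N.+1) :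
  condEnt (Omega k N) (@Xblock k N n j) (@Gle k N n) = ln (INR (k n)) /\
  mutInf (Omega k N) (@Xblock k N n j) (@Xblock k N n j.+1) (@Gle k N n) = R0.
Proof.
have hkn := hpos n.
have [w0 hw0] := Omega_nonempty N hpos hsq.
have hOm : Rlt 0 (INR #|Omega k N|).
  by apply: lt_0_INR; apply/ltP; apply/card_gt0P; exists w0.
have E1 : condEnt (Omega k N) (@Xblock k N n j) (@Gle k N n) = ln (INR (k n)).
  rewrite /condEnt (eq_bigr (fun _ => Rdiv (ln (INR (k n))) (INR #|Omega k N|))).
    rewrite sumR_const; field; lra.
  move=> w hw.
  rewrite (cXZ hj hN hkn hw) (cZ hj hN hkn hw) ratio //.
  exact: (FF_pos hj hN hkn hw).
have E2 : condEnt (Omega k N) (@Xblock k N n j) (fun w => (@Xblock k N n j.+1 w, @Gle k N n w))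
          = ln (INR (k n)).
  rewrite /condEnt (eq_bigr (fun _ => Rdiv (ln (INR (k n))) (INR #|Omega k N|))).
    rewrite sumR_const; field; lra.
  move=> w hw.
  cbv beta; rewrite (cXYZ hj hN hkn hw) (cYZ hj hN hkn hw) ratio1 //.
  exact: (FF_pos hj hN hkn hw).
split; first exact: E1.
by rewrite /mutInf E1 E2 Rminus_diag.
Qed.
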